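(* Let $\Sigma$, $V$ and $f: V\to\mathbb{Z}^3$ be as in the context, and let $A \subseteq V$ be a set of triangles. Then: (1) $A$ is edge-connected if and only if $f(A)$ is 6-connected; (2) $A$ is vertex-connected if and only if $f(A)$ is 26-connected.
   Context: $\Sigma$ denotes the regular tiling of the Euclidean plane by congruent equilateral triangles. The lines containing the edges of the tiling fall into three parallel classes, numbered $i=1,2,3$; within each class the lines are equally spaced. $V$ denotes the set of triangles of $\Sigma$. Consistent labeling: fix a base triangle $v_0$. For $i=1,2,3$ let $H_{i,0}$ be the line of class $i$ containing a side of $v_0$, and $H_{i,-1}$ the line of class $i$ through the vertex of $v_0$ opposite that side. Index all lines of class $i$ by integers $H_{i,k}$, $k\in\mathbb{Z}$, so that consecutive (adjacent) parallel lines have consecutive indices and indices increase in the direction from $H_{i,-1}$ to $H_{i,0}$. Coordinates and cubulation map: for a triangle $v \in V$ set $v_i := k$ if $v$ lies between $H_{i,k}$ and $H_{i,k-1}$; define $f: V \to \mathbb{Z}^3$, $f(v) = (v_1, v_2, v_3)$. A set $A$ of triangles is edge-connected if for any $u,v\in A$ there is a sequence $u=w_0,w_1,\dots,w_n=v$ of triangles in $A$ with $w_j$ and $w_{j+1}$ sharing a side for all $j$; it is vertex-connected if the same holds with ''sharing a side'' replaced by ''sharing a vertex''. A set $S\subseteq\mathbb{Z}^3$ is 6-connected (face-connected) if any two points of $S$ are joined by a sequence of points of $S$ in which consecutive points differ by $1$ in exactly one coordinate and agree in the others; it is 26-connected (vertex-connected) if any two points of $S$ are joined by a sequence of points of $S$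 in which consecutive points are distinct and differ by at most $1$ in each coordinate. *)

(* Defs.v *)
From Stdlib Require Import ZArith List.
Open Scope Z_scope.

(* Model of the triangular tiling Sigma, up to an affine change of coordinates
   (which preserves lines, parallelism, equal spacing, incidence).  Lattice
   points are Z x Z; the three parallel classes of lines are
   x = c (class 1), y = c (class 2), x + y = c (class 3), c in Z. *)
Definition pt := (Z * Z)%type.

Inductive tri : Type :=
| Up (a b : Z)
| Down (a b : Z).

Definition verts (v : tri) : list pt :=
  match v with
  | Up a b => (a, b) :: (a + 1, b) :: (a, b + 1) :: nil
  | Down a b => (a + 1, b) :: (a, b + 1) :: (a + 1, b + 1) :: nil
  end.

(* Two triangles of the tiling share a side iff they have two common vertices
   (the common side is the segment joining them). *)
Definition share_side (u w : tri) : Prop :=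
  u <> w /\ exists p q : pt, p <> q /\
    In p (verts u) /\ In q (verts u) /\ In p (verts w) /\ In q (verts w).

Definition share_vertex (u w : tri) : Prop :=
  u <> w /\ exists p : pt, In p (verts u) /\ In p (verts w).

Inductive cls : Type := C1 | C2 | C3.

(* Linear functional whose level sets are the lines of class i. *)
Definition lin (i : cls) (p : pt) : Z :=
  match i with
  | C1 => fst p
  | C2 => snd p
  | C3 => fst p + snd p
  end.

(* Consistent labeling with base triangle v0 = Up 0 0 = {(0,0),(1,0),(0,1)}:
   H_{1,0} : x = 0 (contains side (0,0)-(0,1)),  H_{1,-1} : x = 1 (through (1,0));
   H_{2,0} : y = 0,                               H_{2,-1} : y = 1;
   H_{3,0} : x + y = 1,                           H_{3,-1} : x + y = 0.
   Consecutive indices = adjacent lines, indices increasing from H_{i,-1} to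
   H_{i,0}.  hval i k is the level of line H_{i,k}: H_{i,k} = {p | lin i p = hval i k}. *)
Definition hval (i : cls) (k : Z) : Z :=
  match i with
  | C1 => - k
  | C2 => - k
  | C3 => k + 1
  end.

Definition lies_between (i : cls) (k : Z) (v : tri) : Prop :=
  forall p, In p (verts v) ->
    Z.min (hval i k) (hval i (k - 1)) <= lin i p <= Z.max (hval i k) (hval i (k - 1)).

Definition Z3 := (Z * Z * Z)%type.

Definition coord (i : cls) (x : Z3) : Z :=
  match x with
  | (x1, x2, x3) =>
    match i with C1 => x1 | C2 => x2 | C3 => x3 end
  end.

Definition adj6 (x y : Z3) : Prop :=
  match x, y with
  | (x1, x2, x3), (y1, y2, y3) =>
      (Z.abs (x1 - y1) = 1 /\ x2 = y2 /\ x3 = y3) \/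
      (x1 = y1 /\ Z.abs (x2 - y2) = 1 /\ x3 = y3) \/
      (x1 = y1 /\ x2 = y2 /\ Z.abs (x3 - y3) = 1)
  end.

Definition adj26 (x y : Z3) : Prop :=
  x <> y /\
  match x, y with
  | (x1, x2, x3), (y1, y2, y3) =>
      Z.abs (x1 - y1) <= 1 /\ Z.abs (x2 - y2) <= 1 /\ Z.abs (x3 - y3) <= 1
  end.

(* walk R S u l v : u = w_0, w_1, ..., w_n = v with l = [w_1; ...; w_n],
   all w_j (j >= 1) in S and R w_j w_{j+1}. *)
Fixpoint walk {X : Type} (R : X -> X -> Prop) (S : X -> Prop)
  (u : X) (l : list X) (v : X) : Prop :=
  match l with
  | nil => u = v
  | w :: l' => S w /\ R u w /\ walk R S w l' v
  end.

Definition connected {X : Type} (R : X -> X -> Prop) (S : X -> Prop) : Prop :=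
  forall u v, S u -> S v -> exists l, walk R S u l v.

Definition edge_connected (A : tri -> Prop) : Prop := connected share_side A.
Definition vertex_connected (A : tri -> Prop) : Prop := connected share_vertex A.

Definition image {X Y : Type} (f : X -> Y) (A : X -> Prop) : Y -> Prop :=
  fun y => exists x, A x /\ f x = y.

(* Main.v *)
Require Import Defs.
From Stdlib Require Import ZArith List Lia.

Definition F (v : tri) : Z3 :=
  match v with Up a b => (-a, -b, a + b) | Down a b => (-a, -b, a + b + 1) end.

Lemma fF (f : tri -> Z3)
  (Hf : forall (v : tri) (i : cls), lies_between i (coord i (f v)) v) :
  forall v, f v = F v.
Proof.
  intros v. pose proof (Hf v C1) as H1. pose proof (Hf v C2) as H2.
  pose proof (Hf v C3) as H3; unfold lies_between in *.
  destruct (f v) as [[x1 x2] x3]. simpl in *.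
  destruct v; simpl in *;
  pose proof (H1 _ (or_introl eq_refl)); pose proof (H1 _ (or_intror (or_introl eq_refl)));
  pose proof (H1 _ (or_intror (or_intror (or_introl eq_refl))));
  pose proof (H2 _ (or_introl eq_refl)); pose proof (H2 _ (or_intror (or_introl eq_refl)));
  pose proof (H2 _ (or_intror (or_intror (or_introl eq_refl))));
  pose proof (H3 _ (or_introl eq_refl)); pose proof (H3 _ (or_intror (or_introl eq_refl)));
  pose proof (H3 _ (or_intror (or_intror (or_introl eq_refl))));
  clear H1 H2 H3; simpl in *; f_equal; [f_equal|..|f_equal|]; lia.
Qed.

Lemma F_inj : forall u v, F u = F v -> u = v.
Proof.
  intros [a b|a b] [c d|c d] H; simpl in H; injection H; intros;
  first [f_equal; lia | exfalso; lia].
Qed.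

Lemma transfer {X Y} (R : X -> X -> Prop) (R' : Y -> Y -> Prop) (g : X -> Y)
  (A : X -> Prop) (Hinj : forall x y, g x = g y -> x = y)
  (H : forall x y, R x y <-> R' (g x) (g y)) :
  connected R A <-> connected R' (image g A).
Proof.
  split.
  - intros Hc y1 y2 [u [Hu <-]] [v [Hv <-]].
    destruct (Hc u v Hu Hv) as [l Hl]. exists (map g l).
    revert u Hu Hl; induction l as [|a l IH]; simpl; intros u Hu Hl.
    + subst; reflexivity.
    + destruct Hl as [Ha [HR Hw]]. split; [exists a; auto|].
      split; [apply H; auto|]. apply IH; auto.
  - intros Hc u v Hu Hv.
    destruct (Hc (g u) (g v) (ex_intro _ u (conj Hu eq_refl))
                 (ex_intro _ v (conj Hv eq_refl))) as [l Hl].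
    revert u Hu Hl; induction l as [|y l IH]; simpl; intros u Hu Hl.
    + exists nil. simpl. apply Hinj; auto.
    + destruct Hl as [[x [Hx <-]] [HR Hw]].
      destruct (IH x Hx Hw) as [l' Hl']. exists (x :: l'). simpl.
      split; auto. split; auto. apply H; auto.
Qed.

Ltac solve_in := simpl;
  solve [repeat (first [left; apply pair_equal_spec; split; lia | right])].

Ltac side_try p q :=
  exists p, q; split; [let HH := fresh "HH" in intro HH; injection HH; lia |
    split; [solve_in | split; [solve_in | split; solve_in]]].

Ltac side_search :=
  lazymatch goal with
  | |- exists p q, _ /\ In p (verts (Up ?a ?b)) /\ _ =>
      first [side_try (a,b) (a+1,b) | side_try (a,b) (a,b+1) | side_try (a+1,b) (a,b+1)]
  | |- exists p q, _ /\ In p (verts (Down ?a ?b)) /\ _ =>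
      first [side_try (a+1,b) (a,b+1) | side_try (a+1,b) (a+1,b+1) | side_try (a,b+1) (a+1,b+1)]
  end.

Ltac vert_search :=
  apply Exists_exists;
  simpl; repeat (first [apply Exists_cons_hd; solve_in | apply Exists_cons_tl]).

Lemma side_iff : forall u w, share_side u w <-> adj6 (F u) (F w).
Proof.
  intros u w; split.
  - intros [Hne [[p1 p2] [[q1 q2] [Hpq [Hu1 [Hu2 [Hw1 Hw2]]]]]]].
    assert (Hpq' : p1 <> q1 \/ p2 <> q2).
    { destruct (Z.eq_dec p1 q1); destruct (Z.eq_dec p2 q2); subst; auto. }
    clear Hpq.
    destruct u as [a b|a b]; destruct w as [c d|c d]; simpl in *;
    repeat match goal with
           | H : _ \/ _ |- _ => destruct H as [H|H]
           | H : False |- _ => destruct H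
           | H : (_, _) = (_, _) |- _ => injection H; clear H; intros
           end;
    try (exfalso; lia);
    first [lia | exfalso; apply Hne; f_equal; lia].
  - intros H.
    destruct u as [a b|a b]; destruct w as [c d|c d]; simpl in H;
    (assert (c = a - 1 \/ c = a \/ c = a + 1) by lia;
     assert (d = b - 1 \/ d = b \/ d = b + 1) by lia);
    repeat match goal with
           | H0 : c = _ \/ _ |- _ => destruct H0 as [H0|[H0|H0]]
           | H0 : d = _ \/ _ |- _ => destruct H0 as [H0|[H0|H0]]
           end; subst c d;
    try (exfalso; lia);
    (split; [first [discriminate | intro HH; injection HH; lia] | side_search]).
Qed.

Lemma vert_iff : forall u w, share_vertex u w <-> adj26 (F u) (F w).
Proof.
  intros u w; split.
  - intros [Hne [[p1 p2] [Hu Hw]]]. unfold adj26.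
    destruct u as [a b|a b]; destruct w as [c d|c d]; simpl in *;
    repeat match goal with
           | H : _ \/ _ |- _ => destruct H as [H|H]
           | H : False |- _ => destruct H
           | H : (_, _) = (_, _) |- _ => injection H; clear H; intros
           end;
    (split; [intro E; injection E; intros; first [lia | apply Hne; f_equal; lia] | lia]).
  - intros [Hne H].
    destruct u as [a b|a b]; destruct w as [c d|c d]; simpl in H;
    try assert (Hne' : a <> c \/ b <> d)
      by (destruct (Z.eq_dec a c); destruct (Z.eq_dec b d); subst; auto;
          exfalso; apply Hne; simpl; f_equal; f_equal; lia);
    (assert (c = a - 1 \/ c = a \/ c = a + 1) by lia;
     assert (d = b - 1 \/ d = b \/ d = b + 1) by lia);
    repeat match goal with
           | H0 : c = _ \/ _ |- _ => destruct H0 as [H0|[H0|H0]]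
           | H0 : d = _ \/ _ |- _ => destruct H0 as [H0|[H0|H0]]
           end; subst c d;
    try (exfalso; lia);
    (split; [first [discriminate | intro HH; injection HH; lia] | vert_search]).
Qed.

Theorem mainTheorem3 (f : tri -> Z3)
  (Hf : forall (v : tri) (i : cls), lies_between i (coord i (f v)) v)
  (A : tri -> Prop) :
  (edge_connected A <-> connected adj6 (image f A)) /\
  (vertex_connected A <-> connected adj26 (image f A)).
Proof.
  pose proof (fF f Hf) as E.
  assert (Hinj : forall x y, f x = f y -> x = y)
    by (intros x y H; rewrite !E in H; apply F_inj; auto).
  split; apply transfer; auto; intros x y; rewrite !E;
  [apply side_iff | apply vert_iff].
Qed.
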